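(* In the three-door Monty Hall game described in the context, let $Q$ be an arbitrary mixed strategy of Monte, with $\pi_\theta=Q(\{(\theta,d):d\neq\theta\})$ for $\theta\in\{1,2,3\}$, and let $u$ be a door with $\pi_u=\min(\pi_1,\pi_2,\pi_3)$. Then the always-switching pure strategy $u\,\mathrm{s}\,\mathrm{s}$ is Bayesian for $Q$, and its winning probability against $Q$ equals $1-\min(\pi_1,\pi_2,\pi_3)$.
   Context: Doors are numbered $1,2,3$. A pure strategy of Monte is a pair $(\theta,d)$ with $\theta\in\{1,2,3\}$ (the door hiding the prize) and $d\in\{1,2,3\}\setminus\{\theta\}$ (six strategies). A pure strategy of Conie is a triple $x\,a\,b$ with $x\in\{1,2,3\}$ and $a,b\in\{\mathrm{h},\mathrm{s}\}$ (twelve strategies). Under the profile $((\theta,d),x\,a\,b)$: Monte offers door $y=\theta$ if $x\neq\theta$ and $y=d$ if $x=\theta$; Conie's action is $a$ if $y$ is the smaller of the two doors in $\{1,2,3\}\setminus\{x\}$ and $b$ otherwise; her final choice is $z=x$ for action $\mathrm{h}$ and $z=y$ for action $\mathrm{s}$; she wins (payoff 1) iff $z=\theta$, else payoff 0. A mixed strategy is a probability distribution on pure strategies. For a mixed strategy $Q$ of Monte, a strategy of Conie is Bayesian if it maximizes Conie's winning probability against $Q$ (strategies played independently) among all mixed strategies of Conie. *)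

(* Defs.v *)
From HB Require Import structures.
From mathcomp Require Import all_boot all_order all_algebra.
Set Implicit Arguments. Unset Strict Implicit. Unset Printing Implicit Defensive.
Import Order.TTheory GRing.Theory Num.Theory.
Local Open Scope ring_scope.

(* Doors 1,2,3 are represented by 'I_3 (0,1,2); the order is preserved. *)
Definition door := 'I_3.

Definition monte_strat := {m : door * door | m.2 != m.1}.
Definition theta_of (m : monte_strat) : door := (val m).1.
Definition dd_of (m : monte_strat) : door := (val m).2.

Inductive action := Hold | Switch.
Definition action_eqb (a b : action) : bool :=
  match a, b with Hold, Hold | Switch, Switch => true | _, _ => false end.
Definition action_of_bool (b : bool) := if b then Switch else Hold.
Definition bool_of_action (a : action) := if a is Switch then true else false.
Lemma action_of_boolK : cancel bool_of_action action_of_bool.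
Proof. by case. Qed.
HB.instance Definition _ := Finite.copy action (can_type action_of_boolK).

Definition conie_strat := (door * action * action)%type.

Definition offered (m : monte_strat) (x : door) : door :=
  if x != theta_of m then theta_of m else dd_of m.

Definition is_smaller_other (x y : door) : bool :=
  [forall z : door, (z != x) ==> (y <= z)%N].

Definition final_choice (m : monte_strat) (c : conie_strat) : door :=
  let: (x, a, b) := c in
  let y := offered m x in
  let act := if is_smaller_other x y then a else b in
  if act is Hold then x else y.

Definition payoff {R : numDomainType} (m : monte_strat) (c : conie_strat) : R :=
  (final_choice m c == theta_of m)%:R.

Definition is_mixed {R : numDomainType} {T : finType} (p : {ffun T -> R}) : Prop :=
  (forall t, 0 <= p t) /\ \sum_t p t = 1.

Definition win_prob {R : numDomainType} (P : {ffun conie_strat -> R})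
  (Q : {ffun monte_strat -> R}) : R :=
  \sum_c \sum_m P c * Q m * payoff m c.

Definition dirac {R : numDomainType} {T : finType} (t0 : T) : {ffun T -> R} :=
  [ffun t => (t == t0)%:R].

Definition win_prob_pure {R : numDomainType} (c : conie_strat)
  (Q : {ffun monte_strat -> R}) : R := win_prob (dirac c) Q.

Definition prior {R : numDomainType} (Q : {ffun monte_strat -> R}) (th : door) : R :=
  \sum_(m | theta_of m == th) Q m.

Definition bayesian {R : numDomainType} (Q : {ffun monte_strat -> R})
  (P : {ffun conie_strat -> R}) : Prop :=
  is_mixed P /\ forall P' : {ffun conie_strat -> R}, is_mixed P' -> win_prob P' Q <= win_prob P Q.

Definition min3 {R : realDomainType} (f : door -> R) : R :=
  Num.min (f ord0) (Num.min (f (inord 1)) (f (inord 2))).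

(* Main.v *)
Require Import Defs.
From mathcomp Require Import all_boot all_order all_algebra.
Lemma isoE (x y : door) : is_smaller_other x y =
  [&& (val x != 0) ==> (val y <= 0), (val x != 1) ==> (val y <= 1) & (val x != 2) ==> (val y <= 2)].
Proof.
apply/forallP/idP.
- move=> H; apply/and3P; split.
  + by have := H (inord 0); rewrite -val_eqE /= inordK // eq_sym.
  + by have := H (inord 1); rewrite -val_eqE /= inordK // eq_sym.
  + by have := H (inord 2); rewrite -val_eqE /= inordK // eq_sym.
- case/and3P=> H0 H1 H2 [[|[|[|z]]] Hz] //; rewrite -val_eqE /= eq_sym //.
Qed.
Definition tnat (x : door) (a b : action) : nat :=
  match a, b with
  | Switch, Switch => val x
  | Switch, Hold | Hold, Hold => if val x == 2 then 1 else 2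
  | Hold, Switch => if val x == 0 then 1 else 0
  end.
Lemma key x a b m : final_choice m (x,a,b) == theta_of m -> val (theta_of m) != tnat x a b.
Proof.
case: m => [[[[|[|[|t]]] Ht] [[|[|[|d]]] Hd]] /= H] //;
case: x => [[|[|[|x]]] Hx] //; case: a; case: b;
rewrite /final_choice /offered /theta_of /dd_of /= !isoE /= -?val_eqE //=.
Qed.
Lemma ss x m : (final_choice m (x,Switch,Switch) == theta_of m) = (theta_of m != x).
Proof.
case: m => [[[[|[|[|t]]] Ht] [[|[|[|d]]] Hd]] /= H] //;
case: x => [[|[|[|x]]] Hx] //;
rewrite /final_choice /offered /theta_of /dd_of /= !isoE /= -?val_eqE //=.
Qed.
Import Order.TTheory GRing.Theory Num.Theory.
Local Open Scope ring_scope.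

Lemma min3_le (R : realFieldType) (f : door -> R) t : min3 f <= f t.
Proof.
have : t = ord0 \/ t = inord 1 \/ t = inord 2.
  case: t => [[|[|[|?]]] Ht] //; [left|right;left|right;right]; apply/val_inj; rewrite /= ?inordK //.
by case=> [->|[->|->]]; rewrite /min3 !ge_min lexx ?orbT.
Qed.

Lemma win_probE (R : realFieldType) (P : {ffun conie_strat -> R}) Q :
  win_prob P Q = \sum_c P c * \sum_m Q m * payoff m c.
Proof.
rewrite /win_prob; apply eq_bigr => c _; rewrite mulr_sumr; apply eq_bigr => m _.
by rewrite mulrA.
Qed.

Lemma sum_not (R : realFieldType) (Q : {ffun monte_strat -> R}) t :
  is_mixed Q -> \sum_m Q m * (theta_of m != t)%:R = 1 - prior Q t.
Proof.
case=> _ HQ; rewrite -[X in X - _]HQ /prior [in RHS](bigID (fun m => theta_of m == t)) /= addrC addrK.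
rewrite (bigID (fun m => theta_of m == t)) /= big1 ?add0r; last by move=> m ->; rewrite mulr0.
by apply eq_bigr => m ->; rewrite mulr1.
Qed.

Lemma W_le (R : realFieldType) (Q : {ffun monte_strat -> R}) c :
  is_mixed Q -> \sum_m Q m * payoff m c <= 1 - min3 (prior Q).
Proof.
move=> HQ; case: c => [[x a] b].
set t : door := inord (tnat x a b).
have tE : val t = tnat x a b by apply: inordK; rewrite /tnat; case: (a); case: (b) => //=; case: ifP.
apply: (@le_trans _ _ (1 - prior Q t)); last by rewrite lerB // min3_le.
rewrite -sum_not //; apply: ler_sum => m _; apply: ler_wpM2l; first by case: HQ.
rewrite /payoff; case E: (final_choice m (x, a, b) == theta_of m) => //=.
have := @key x a b m E; rewrite -tE -val_eqE /= => ->; by [].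
Qed.

Theorem mainTheorem5 (R : realFieldType) (Q : {ffun monte_strat -> R}) (u : door) :
  is_mixed Q ->
  prior Q u = min3 (prior Q) ->
  bayesian Q (dirac (u, Switch, Switch)) /\
  win_prob (dirac (u, Switch, Switch)) Q = 1 - min3 (prior Q).
Proof.
move=> HQ Hu.
have Wd : win_prob (dirac (u, Switch, Switch)) Q = 1 - min3 (prior Q).
  rewrite win_probE (bigD1 (u, Switch, Switch)) //= [X in _ + X]big1 ?addr0; last first.
    by move=> c; rewrite ?andTb => /negbTE Hc; rewrite /dirac ffunE Hc mul0r.
  rewrite /dirac ffunE eqxx mul1r -Hu -sum_not //; apply eq_bigr => m _.
  by rewrite /payoff ss.
split=> //; split.
  split; first by move=> c; rewrite /dirac ffunE ler0n.
  rewrite (bigD1 (u, Switch, Switch)) //= [X in _ + X]big1 ?addr0; last first.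
    by move=> c; rewrite ?andTb => /negbTE Hc; rewrite /dirac ffunE Hc.
  by rewrite /dirac ffunE eqxx.
move=> P' [HP0 HP1]; rewrite Wd win_probE.
apply: (@le_trans _ _ (\sum_c P' c * (1 - min3 (prior Q)))).
  by apply: ler_sum => c _; apply: ler_wpM2l => //; apply: W_le.
by rewrite -mulr_suml HP1 mul1r.
Qed.
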